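(* Let $(a,\alpha)\neq(0,0)$. There exist $\delta_0>0$ and $c>0$ such that for all $N$, all $L\le\delta_0N$, all $\mathscr P\subseteq\{1,\dots,N-1\}$ with $\min\mathscr P<L$, and all $\phi:\{-1,\dots,N+1\}\to\mathbb R$ with $\phi(-1)=N^2a-N\alpha$, $\phi(0)=N^2a$ and $\phi(k)=0$ for $k\in\mathscr P$, one has $\mathcal H_{[-1,N+1]}(\phi)\ge c\,N^2/L$.
   Context: $\mathcal H_{[-1,N+1]}(\phi)=\sum_{k=0}^{N}\frac12(\phi_{k+1}+\phi_{k-1}-2\phi_k)^2$. *)

(* Defs.v *)
From Stdlib Require Import Reals ZArith.
Open Scope R_scope.

(* H_{[-1,N+1]}(phi) = sum_{k=0}^{N} 1/2 (phi(k+1) + phi(k-1) - 2 phi(k))^2.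
   phi is a function on Z; only its values on {-1,...,N+1} are used. *)
Definition H_energy (N : nat) (phi : Z -> R) : R :=
  sum_f_R0 (fun k : nat =>
     let z := Z.of_nat k in
     / 2 * (phi (z + 1)%Z + phi (z - 1)%Z - 2 * phi z) ^ 2) N.

(* Main.v *)
Require Import Defs.
From Stdlib Require Import Reals ZArith Lra Lia Psatz.
Open Scope R_scope.

Fixpoint sm (f : nat -> R) (n : nat) : R :=
  match n with O => 0 | S k => sm f k + f k end.

Lemma sm_S f n : sm f (S n) = sm f n + f n.
Proof. reflexivity. Qed.

Lemma sum_sm f N : sum_f_R0 f N = sm f (S N).
Proof. induction N; simpl in *; [lra|]. rewrite IHN. simpl. lra. Qed.

Lemma sm_half g n : sm (fun k => / 2 * g k) n = / 2 * sm g n.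
Proof. induction n; simpl; [lra|]. rewrite IHn; lra. Qed.

Lemma sm_mono f m n : (forall k, 0 <= f k) -> (m <= n)%nat -> sm f m <= sm f n.
Proof. intros Hf H. induction H; [lra|]. simpl. specialize (Hf m0). lra. Qed.

Lemma sm_nonneg f n : (forall k, 0 <= f k) -> 0 <= sm f n.
Proof. intros Hf. induction n; simpl; [lra|]. specialize (Hf n). lra. Qed.

Lemma sm_lin c g f n : sm (fun i => (c - g i) * f i) n = c * sm f n - sm (fun i => g i * f i) n.
Proof. induction n; simpl; [lra|]. rewrite IHn; ring. Qed.

Lemma sm_bound f n b : (forall i, (i < n)%nat -> f i <= b) -> sm f n <= INR n * b.
Proof. induction n; intros H; [simpl; lra|]. simpl sm. rewrite S_INR.
  assert (sm f n <= INR n * b) by (apply IHn; intros; apply H; lia).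
  assert (f n <= b) by (apply H; lia). lra. Qed.

Lemma cs_t u v n t : 0 < t ->
  2 * sm (fun i => u i * v i) n <= t * sm (fun i => u i ^ 2) n + / t * sm (fun i => v i ^ 2) n /\
  - (2 * sm (fun i => u i * v i) n) <= t * sm (fun i => u i ^ 2) n + / t * sm (fun i => v i ^ 2) n.
Proof. intros Ht. induction n; [simpl; split; lra|]; rewrite !sm_S. destruct IHn as [H1 H2].
  assert (Hit : 0 < / t) by (apply Rinv_0_lt_compat; lra).
  assert (Hk : t * / t = 1) by (field; lra).
  assert (0 <= / t * (t * u n - v n) ^ 2) by (apply Rmult_le_pos; [lra| apply pow2_ge_0]).
  assert (0 <= / t * (t * u n + v n) ^ 2) by (apply Rmult_le_pos; [lra| apply pow2_ge_0]).
  assert (E1 : / t * (t * u n - v n) ^ 2 = t * u n ^ 2 - 2 * (u n * v n) + / t * v n ^ 2)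
    by (field; lra).
  assert (E2 : / t * (t * u n + v n) ^ 2 = t * u n ^ 2 + 2 * (u n * v n) + / t * v n ^ 2)
    by (field; lra).
  split; lra. Qed.

Lemma real_cs X W S M : 0 < M -> W <= M -> 0 <= S ->
  (forall t, 0 < t -> 2 * X <= t * W + / t * S /\ - (2 * X) <= t * W + / t * S) ->
  X ^ 2 <= S * M.
Proof. intros HM HW HS H.
  destruct (Req_dec X 0) as [->|HX]; [nra|].
  assert (HaX : 0 < Rabs X) by (apply Rabs_pos_lt; auto).
  specialize (H (Rabs X / M) (Rdiv_lt_0_compat _ _ HaX HM)).
  assert (2 * Rabs X <= Rabs X / M * W + / (Rabs X / M) * S).
  { assert (Hr : Rabs X = X \/ Rabs X = - X) by (unfold Rabs; destruct (Rcase_abs X); auto).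
    set (r := Rabs X) in *. set (q := r / M * W + / (r / M) * S) in *. destruct Hr; lra. }
  assert (Rabs X / M * W <= Rabs X) by
    (unfold Rdiv; apply Rle_trans with (Rabs X * / M * M); [apply Rmult_le_compat_l; [apply Rmult_le_pos; [lra| left; apply Rinv_0_lt_compat; lra]|lra] | right; field; lra]).
  assert (Heq : / (Rabs X / M) * S = S * M / Rabs X) by (field; lra).
  assert (Rabs X <= S * M / Rabs X) by lra.
  assert (Rabs X * Rabs X <= S * M) by
    (apply Rmult_le_compat_l with (r := Rabs X) in H2; [|lra]; replace (Rabs X * (S * M / Rabs X)) with (S*M) in H2 by (field; lra); lra).
  replace (X ^ 2) with (Rabs X * Rabs X); [lra|]. rewrite <- Rabs_mult. simpl.
  rewrite Rmult_1_r. apply Rabs_right. nra. Qed.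

Section S.
Variable phi : Z -> R.
Definition ee (i : nat) := phi (Z.of_nat i + 1) + phi (Z.of_nat i - 1) - 2 * phi (Z.of_nat i).

Lemma ident n :
  phi (Z.of_nat n) - phi (Z.of_nat n - 1) = (phi 0%Z - phi (-1)%Z) + sm ee n /\
  phi (Z.of_nat n) = phi 0%Z + INR n * (phi 0%Z - phi (-1)%Z) + INR n * sm ee n - sm (fun i => INR i * ee i) n.
Proof. induction n; simpl sm.
  - simpl. split; lra.
  - destruct IHn as [H1 H2]. rewrite S_INR.
    replace (Z.of_nat (S n)) with (Z.of_nat n + 1)%Z by lia.
    replace (Z.of_nat n + 1 - 1)%Z with (Z.of_nat n) by lia.
    assert (Hee : ee n = phi (Z.of_nat n + 1) + phi (Z.of_nat n - 1) - 2 * phi (Z.of_nat n)) by reflexivity.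
    split; [lra|].
    assert (E : phi (Z.of_nat n + 1) = phi (Z.of_nat n) + (phi 0%Z - phi (-1)%Z) + sm ee n + ee n) by lra.
    rewrite E, H2. ring.
Qed.
End S.

Lemma sq_pos x : x <> 0 -> 0 < x ^ 2.
Proof. intros H. rewrite <- Rsqr_pow2. apply Rsqr_pos_lt; auto. Qed.

Lemma key (phi : Z -> R) (N m : nat) : (1 <= m)%nat -> (m <= S N)%nat ->
  (phi (Z.of_nat m) - phi 0%Z - INR m * (phi 0%Z - phi (-1)%Z)) ^ 2 <= 2 * H_energy N phi * INR m ^ 3.
Proof. intros Hm1 HmN.
  assert (HH : H_energy N phi = / 2 * sm (fun k => ee phi k ^ 2) (S N)).
  { unfold H_energy. rewrite sum_sm, <- sm_half. reflexivity. }
  destruct (ident phi m) as [_ Hid].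
  assert (HX : phi (Z.of_nat m) - phi 0%Z - INR m * (phi 0%Z - phi (-1)%Z)
     = sm (fun i => (INR m - INR i) * ee phi i) m) by (rewrite sm_lin; lra).
  rewrite HX.
  assert (Hm : 1 <= INR m) by (apply (le_INR 1); auto).
  assert (HS : sm (fun k => ee phi k ^ 2) m <= sm (fun k => ee phi k ^ 2) (S N))
    by (apply sm_mono; auto; intros; apply pow2_ge_0).
  assert (Hc : (sm (fun i => (INR m - INR i) * ee phi i) m) ^ 2 <= sm (fun k => ee phi k ^ 2) m * INR m ^ 3).
  { apply real_cs with (W := sm (fun i => (INR m - INR i) ^ 2) m).
    - apply pow_lt; lra.
    - apply Rle_trans with (INR m * INR m ^ 2); [|right; ring].
      apply sm_bound. intros i Hi.
      assert (INR i < INR m) by (apply lt_INR; auto).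
      assert (0 <= INR i) by apply pos_INR. nra.
    - apply sm_nonneg; intros; apply pow2_ge_0.
    - intros t Ht. apply (cs_t (fun i => INR m - INR i) (ee phi) m t Ht). }
  assert (0 < INR m ^ 3) by (apply pow_lt; lra).
  rewrite HH. nra.
Qed.

Theorem lemma3p13 (a alpha : R) (Hne : a <> 0 \/ alpha <> 0) :
  exists delta0 c : R, 0 < delta0 /\ 0 < c /\
    forall (N L : nat) (P : nat -> Prop) (phi : Z -> R),
      INR L <= delta0 * INR N ->
      (forall k, P k -> (1 <= k <= N - 1)%nat) ->
      (exists m, P m /\ (forall k, P k -> (m <= k)%nat) /\ (m < L)%nat) ->
      phi (-1)%Z = INR N ^ 2 * a - INR N * alpha ->
      phi 0%Z = INR N ^ 2 * a ->
      (forall k, P k -> phi (Z.of_nat k) = 0) ->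
      H_energy N phi >= c * INR N ^ 2 / INR L.
Proof.
  destruct (Req_dec a 0) as [Ha|Ha].
  - assert (Hal : alpha <> 0) by (destruct Hne; tauto).
    exists 1, (alpha ^ 2 / 2). split; [lra|]. split; [assert (0 < alpha ^2) by (apply sq_pos; auto); lra|].
    intros N L P phi HL HP [m [Pm [_ HmL]]] Hm1 H0 Hz.
    destruct (HP m Pm) as [Hm1' HmN].
    pose proof (key phi N m Hm1' ltac:(lia)) as K.
    rewrite Hz, H0, Hm1, Ha in K; auto.
    assert (Hm : 1 <= INR m) by (apply (le_INR 1); auto).
    assert (HmL' : INR m + 1 <= INR L) by (rewrite <- S_INR; apply le_INR; lia).
    set (E := H_energy N phi) in *. set (n := INR N) in *. set (x := INR m) in *. set (l := INR L) in *.
    assert (0 <= E) by (assert (0 < x^3) by (apply pow_lt; lra); nra).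
    assert (K2 : x ^ 2 * (n ^ 2 * alpha ^ 2) <= x ^ 2 * (2 * E * x)).
    { replace (x ^ 2 * (n ^ 2 * alpha ^ 2)) with ((0 - n ^ 2 * 0 - x * (n ^ 2 * 0 - (n ^ 2 * 0 - n * alpha))) ^ 2) by ring. lra. }
    assert (K3 : n ^ 2 * alpha ^ 2 <= 2 * E * x).
    { apply Rmult_le_reg_l with (x ^ 2); [apply pow_lt; lra| exact K2]. }
    apply Rle_ge. unfold Rdiv. apply Rle_trans with (2 * E * x / 2 * / l).
    + replace (alpha ^ 2 / 2 * n ^ 2) with (n ^ 2 * alpha ^ 2 / 2) by (unfold Rdiv; ring).
      apply Rmult_le_compat_r; [left; apply Rinv_0_lt_compat; lra| lra].
    + replace (2 * E * x / 2 * / l) with (E * (x / l)) by (field; lra).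
      assert (x / l <= 1) by (apply Rmult_le_reg_r with l; [lra|]; unfold Rdiv; rewrite Rmult_assoc, Rinv_l; lra).
      assert (0 <= x / l) by (unfold Rdiv; apply Rmult_le_pos; [lra| left; apply Rinv_0_lt_compat; lra]).
      nra.
  - set (d := Rabs a / (2 * (Rabs alpha + Rabs a))).
    assert (Hpa : 0 < Rabs a) by (apply Rabs_pos_lt; auto).
    assert (Hpal : 0 <= Rabs alpha) by apply Rabs_pos.
    assert (Hd : 0 < d) by (unfold d; apply Rdiv_lt_0_compat; lra).
    assert (Hd2 : 2 * d * Rabs alpha <= Rabs a).
    { unfold d. replace (2 * (Rabs a / (2 * (Rabs alpha + Rabs a))) * Rabs alpha)
        with (Rabs a * (Rabs alpha / (Rabs alpha + Rabs a))) by (field; lra).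
      assert (Rabs alpha / (Rabs alpha + Rabs a) <= 1).
      { apply Rmult_le_reg_r with (Rabs alpha + Rabs a); [lra|]. unfold Rdiv. rewrite Rmult_assoc, Rinv_l; lra. }
      nra. }
    assert (Hd1 : 2 * d <= 1).
    { unfold d. replace (2 * (Rabs a / (2 * (Rabs alpha + Rabs a)))) with (Rabs a / (Rabs alpha + Rabs a)) by (field; lra).
      apply Rmult_le_reg_r with (Rabs alpha + Rabs a); [lra|]. unfold Rdiv. rewrite Rmult_assoc, Rinv_l; lra. }
    exists d, (a ^ 2 / 2). split; [lra|]. split; [assert (0 < a ^2) by (apply sq_pos; auto); lra|].
    intros N L P phi HL HP [m [Pm [_ HmL]]] Hm1 H0 Hz.
    destruct (HP m Pm) as [Hm1' HmN].
    pose proof (key phi N m Hm1' ltac:(lia)) as K.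
    rewrite Hz, H0, Hm1 in K; auto.
    assert (Hm : 1 <= INR m) by (apply (le_INR 1); auto).
    assert (HmL' : INR m + 1 <= INR L) by (rewrite <- S_INR; apply le_INR; lia).
    assert (Hn0 : INR m + 1 <= INR N) by (rewrite <- S_INR; apply le_INR; lia).
    set (E := H_energy N phi) in *. set (n := INR N) in *. set (x := INR m) in *. set (l := INR L) in *.
    assert (Hx3 : 0 < x^3) by (apply pow_lt; lra).
    assert (HE0 : 0 <= 2 * E * x ^ 3) by (eapply Rle_trans; [apply pow2_ge_0|exact K]).
    assert (HE : 0 <= E) by nra.
    assert (Hn : 0 < n) by lra.
    assert (Hxa : x * Rabs alpha <= n * Rabs a / 2).
    { assert (x * Rabs alpha <= d * n * Rabs alpha) by nra. nra. }
    assert (Hlow : n ^ 2 * Rabs a / 2 <= Rabs (n ^ 2 * a + x * n * alpha)).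
    { assert (Rabs (x * n * alpha) = n * (x * Rabs alpha)).
      { rewrite !Rabs_mult, (Rabs_right x), (Rabs_right n); try lra; ring. }
      assert (Rabs (n^2 * a) = n ^ 2 * Rabs a).
      { rewrite Rabs_mult, (Rabs_right (n^2)); [ring| apply Rle_ge, pow2_ge_0]. }
      pose proof (Rabs_triang_inv (n ^ 2 * a) (- (x * n * alpha))) as T.
      rewrite Rabs_Ropp in T. replace (n ^ 2 * a - - (x * n * alpha)) with (n ^ 2 * a + x * n * alpha) in T by ring.
      nra. }
    assert (Ksq : (n ^ 2 * Rabs a / 2) ^ 2 <= 2 * E * x ^ 3).
    { apply Rle_trans with (Rabs (n ^ 2 * a + x * n * alpha) ^ 2).
      - apply pow_incr. split; [|exact Hlow]. nra.
      - rewrite pow2_abs. replace ((n ^ 2 * a + x * n * alpha) ^ 2) with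
          ((0 - n ^ 2 * a - x * (n ^ 2 * a - (n ^ 2 * a - n * alpha))) ^ 2) by ring. exact K. }
    assert (Hl0 : 0 < l) by lra.
    assert (H2l : 2 * l <= n).
    { assert (2 * d * n <= n) by (apply Rle_trans with (1 * n); [apply Rmult_le_compat_r; lra| lra]). lra. }
    assert (Hl2 : l ^ 2 <= n ^ 2 / 4) by nra.
    assert (Hxl : x ^ 3 <= l ^ 3) by (apply pow_incr; lra).
    assert (Hx3l : x ^ 3 <= l * (n ^ 2 / 4)) by (replace (l ^ 3) with (l * l ^ 2) in Hxl by ring; nra).
    assert (Ha2 : (n ^ 2 * Rabs a / 2) ^ 2 = n ^ 2 * (n ^ 2 * a ^ 2) / 4).
    { rewrite <- (pow2_abs a). field. }
    rewrite Ha2 in Ksq.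
    assert (K4 : n ^ 2 * (n ^ 2 * a ^ 2) <= n ^ 2 * (2 * E * l)) by nra.
    assert (K5 : n ^ 2 * a ^ 2 <= 2 * E * l).
    { apply Rmult_le_reg_l with (n ^ 2); [apply pow_lt; lra | exact K4]. }
    apply Rle_ge. apply Rmult_le_reg_r with l; [lra|].
    replace (a ^ 2 / 2 * n ^ 2 / l * l) with (n ^ 2 * a ^ 2 / 2) by (field; lra). lra.
Qed.
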